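(* Let $p$ be a prime, $m,t\ge 1$, $B=\mathrm{GF}(p^m)$ and $F=\mathrm{GF}(p^{mt})$, and assume that $t$ is divisible by $p$ (the characteristic of $F$). Let $n=|F|=|B|^t$, $k=n(1-1/|B|)$, and let $\mathcal{C}=\mathrm{RS}(F,k)=\{(f(\alpha))_{\alpha\in F} : f\in F[x],\ \deg f\le k-1\}$, where the symbol $f(\alpha)$ is stored at the node indexed by $\alpha$. Let $K=\ker(\mathrm{Tr}_{F/B})=\{\kappa\in F:\mathrm{Tr}_{F/B}(\kappa)=0\}$. Suppose $f(\alpha^* )$, $f(\overline{\alpha})$, $f(\alpha')$ are three erased symbols, with $\alpha^*,\overline{\alpha},\alpha'$ distinct, such that $$\left\{\frac{\overline{\alpha}-\alpha^*}{\overline{\alpha}-\alpha'},\ \frac{\alpha'-\overline{\alpha}}{\alpha'-\alpha^*},\ \frac{\alpha^*-\alpha'}{\alpha^*-\overline{\alpha}}\right\}\cap K\neq\varnothing.$$ Then there exists a centralized repair scheme that recovers the three erased symbols by downloading three sub-symbols (elements of $B$) from each of the $n-3$ surviving nodes, each computed from that node's stored symbol; i.e., the repair bandwidth is $3(n-3)$ sub-symbols.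
   Context: Elements of $F$ are called symbols and elements of $B$ sub-symbols. The trace is $\mathrm{Tr}_{F/B}(x)=\sum_{i=0}^{t-1}x^{|B|^i}$. In centralized repair, a single repair center downloads data from the surviving nodes and computes all erased symbols; the repair bandwidth is the total number of sub-symbols downloaded. *)

(* Defs.v *)
From HB Require Import structures.
From mathcomp Require Import all_boot all_order all_algebra all_field.
Set Implicit Arguments. Unset Strict Implicit. Unset Printing Implicit Defensive.
Import GRing.Theory.
Local Open Scope ring_scope.

(* F : a finite field of order q^t; the base field B = GF(q) is realized as the
   unique subfield of F of order q, namely the fixed points of x |-> x^q. *)
Definition in_base (F : finFieldType) (q : nat) (x : F) : bool := x ^+ q == x.

Definition trace_FB (F : finFieldType) (q t : nat) (x : F) : F :=
  \sum_(i < t) x ^+ (q ^ i).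

(* A centralized repair scheme for RS(F,k) (evaluation at all of F, the symbol
   f(a) stored at node a) recovering the erased symbols indexed by E, which
   downloads exactly b sub-symbols (elements of B) from each surviving node,
   each computed from that node's stored symbol alone.
   g a j : F -> F is the j-th download function of node a (values in B);
   rec is the repair center's computation; it only sees downloads of the
   surviving nodes (erased nodes are masked to 0).  Bandwidth = b*(n - |E|). *)
Definition centralized_repair_scheme (F : finFieldType) (q k : nat)
    (E : {set F}) (b : nat) : Prop :=
  exists (g : F -> 'I_b -> F -> F) (rec : (F -> 'I_b -> F) -> F -> F),
    (forall a j x, in_base q (g a j x)) /\
    (forall f : {poly F}, (size f <= k)%N ->
       forall e, e \in E ->
         rec (fun a j => if a \in E then 0 else g a j f.[a]) e = f.[e]).

(* Main.v *)
Require Import Defs.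
From HB Require Import structures.
From mathcomp Require Import all_boot all_order all_algebra all_field.
From mathcomp Require Import zify ring.
From Stdlib Require Import ClassicalEpsilon.
Import GRing.Theory.
Local Open Scope ring_scope.

Set Implicit Arguments. Unset Strict Implicit. Unset Printing Implicit Defensive.

Lemma frobq (F : finFieldType) q (Hq : [pchar F].-nat q) i (x y : F) :
  (x + y) ^+ (q ^ i) = x ^+ (q ^ i) + y ^+ (q ^ i).
Proof. by apply: exprDn_pchar; rewrite pnatX Hq. Qed.

Lemma TrD (F : finFieldType) q t (Hq : [pchar F].-nat q) (x y : F) :
  trace_FB q t (x + y) = trace_FB q t x + trace_FB q t y.
Proof. by rewrite /trace_FB -big_split; apply: eq_bigr => i _; rewrite frobq. Qed.

Lemma Tr0 (F : finFieldType) q t (q0 : (0 < q)%N) : trace_FB q t (0 : F) = 0.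
Proof. by rewrite /trace_FB big1 // => i _; rewrite expr0n expn_eq0 eqn0Ngt q0. Qed.

Lemma TrN (F : finFieldType) q t (Hq : [pchar F].-nat q) (q0 : (0 < q)%N) (x : F) :
  trace_FB q t (- x) = - trace_FB q t x.
Proof. by apply/eqP; rewrite -addr_eq0 -TrD // addNr Tr0. Qed.

Lemma Tr_sum (F : finFieldType) q t (Hq : [pchar F].-nat q) (q0 : (0 < q)%N)
  (I : finType) (f : I -> F) :
  trace_FB q t (\sum_i f i) = \sum_i trace_FB q t (f i).
Proof. by apply: big_morph; [exact: TrD | exact: Tr0]. Qed.

Lemma fixq (F : finFieldType) q (b : F) (Hb : b ^+ q = b) i : b ^+ (q ^ i) = b.
Proof. by elim: i => [|i IH]; rewrite ?expr1 // expnS exprM Hb. Qed.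

Lemma TrZ (F : finFieldType) q t (b x : F) (Hb : b ^+ q = b) :
  trace_FB q t (b * x) = b * trace_FB q t x.
Proof. by rewrite /trace_FB mulr_sumr; apply: eq_bigr => i _; rewrite exprMn (fixq Hb). Qed.

Lemma Tr1 (F : finFieldType) q t : trace_FB q t (1 : F) = t%:R.
Proof. by rewrite /trace_FB (eq_bigr (fun _ => 1)) ?sumr_const ?card_ord // => i _; rewrite expr1n. Qed.

Lemma Tr_base (F : finFieldType) q t (Hq : [pchar F].-nat q) (q0 : (0 < q)%N)
  (Ht : (1 <= t)%N) (HF : #|F| = (q ^ t)%N) (x : F) :
  trace_FB q t x ^+ q = trace_FB q t x.
Proof.
have M : {morph (fun y : F => y ^+ q) : a b / a + b}.
  by move=> a b /=; have := frobq Hq 1 a b; rewrite expn1.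
have M0 : (0 : F) ^+ q = 0 by rewrite expr0n eqn0Ngt q0.
rewrite /trace_FB (big_morph _ M M0).
case: t Ht HF => // t _ HF.
rewrite big_ord_recr big_ord_recl /= addrC; congr (_ + _).
  by rewrite -exprM -expnSr -HF expf_card expn0 expr1.
by apply: eq_bigr => i _; rewrite -exprM -expnSr.
Qed.
Lemma Tr_nondeg (F : finFieldType) q t (q1 : (1 < q)%N) (Ht : (1 <= t)%N) (HF : #|F| = (q ^ t)%N)
  (y : F) : (forall z, trace_FB q t (z * y) = 0) -> y = 0.
Proof.
move=> H; apply/eqP; apply/negPn/negP => y0.
pose T : {poly F} := \sum_(i < t) 'X^(q ^ i).
have rT : all (root T) (enum F).
  apply/allP => z _; rewrite /root /T horner_sum.
  apply/eqP; rewrite -[RHS](H (z / y)) divfK // /trace_FB.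
  by apply: eq_bigr => i _; rewrite hornerXn.
have sT : (size T <= size (enum F))%N.
  rewrite -cardE HF; apply: leq_trans (size_sum _ _ _) _.
  apply/bigmax_leqP => i _; rewrite size_polyXn ltn_exp2l //.
have T0 := roots_geq_poly_eq0 rT (enum_uniq _) sT.
have : T`_1 = 1.
  rewrite /T; case: (t) Ht => // t' _.
  rewrite coef_sum big_ord_recl /= coefXn expn0 eqxx big1 ?addr0 // => i _.
  rewrite coefXn; case: eqP => // /esym /eqP.
  by rewrite -[X in _ == X](expn0 q) eqn_exp2l ?(ltnW q1).
by rewrite T0 coef0 => /eqP; rewrite eq_sym oner_eq0.
Qed.

Lemma psum (F : finFieldType) (j : nat) (Hn : ((#|F|)%:R : F) = 0)
  (Hj : (j < #|F|.-1)%N) : \sum_(x : F) x ^+ j = 0.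
Proof.
case: j Hj => [|j] Hj.
  by rewrite (eq_bigr (fun _ => 1)) ?sumr_const // => x _; rewrite expr0.
case: (pickP (fun a : F => (a != 0) && (a ^+ j.+1 != 1))) => [a /andP[a0 aj] | H].
  have E : \sum_(x : F) x ^+ j.+1 = a ^+ j.+1 * \sum_(x : F) x ^+ j.+1.
    rewrite mulr_sumr (reindex_inj (mulfI a0)) /=.
    by apply: eq_bigr => x _; rewrite exprMn.
  apply/eqP; move/eqP: E; rewrite -subr_eq0 -{1}[\sum_x _]mul1r -mulrBl mulf_eq0.
  by rewrite subr_eq0 eq_sym (negPf aj).
exfalso.
pose P : {poly F} := 'X^(j.+1) - 1.
pose rs := enum (predC1 (0 : F)).
have rP : all (root P) rs.
  apply/allP => z; rewrite mem_enum => z0; have z0' : z != 0 := z0; have := H z; rewrite /= z0' /=.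
  move=> /negbFE/eqP zj.
  by rewrite /root /P hornerD hornerN hornerXn hornerC zj subrr.
have sP : (size P <= size rs)%N.
  rewrite /rs -cardE cardC1 /P size_polyDl ?size_polyXn // size_polyN size_poly1.
  by [].
have P0 := roots_geq_poly_eq0 rP (enum_uniq _) sP.
have : P.[0] = 0 by rewrite P0 horner0.
rewrite /P hornerD hornerN hornerXn hornerC expr0n /= sub0r => /eqP.
by rewrite oppr_eq0 oner_eq0.
Qed.

Lemma psumP (F : finFieldType) (P : {poly F}) (Hn : ((#|F|)%:R : F) = 0)
  (HP : (size P <= #|F|.-1)%N) : \sum_(x : F) P.[x] = 0.
Proof.
under eq_bigr do rewrite horner_coef.
rewrite exchange_big big1 // => i _.
rewrite -mulr_sumr psum ?mulr0 //.
exact: leq_trans (ltn_ord i) HP.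
Qed.

Definition chk (F : finFieldType) q t (e z : F) : {poly F} :=
  \sum_(j < t) (z ^+ (q ^ j)) *: ('X - e%:P) ^+ (q ^ j).-1.

Lemma chk_size (F : finFieldType) q t (q0 : (0 < q)%N) (e z : F) :
  (size (chk q t e z) <= q ^ t.-1)%N.
Proof.
apply: leq_trans (size_sum _ _ _) _; apply/bigmax_leqP => j _.
apply: leq_trans (size_scale_leq _ _) _.
rewrite size_exp_XsubC prednK ?expn_gt0 ?q0 //.
apply: leq_pexp2l q0 _; case: (t) j => [[]//|t'] j /=; by rewrite -ltnS.
Qed.

Lemma chk_e (F : finFieldType) q t (q1 : (1 < q)%N) (Ht : (1 <= t)%N) (e z : F) :
  (chk q t e z).[e] = z.
Proof.
rewrite /chk horner_sum; case: t Ht => // t _.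
rewrite big_ord_recl big1 ?addr0.
  by rewrite hornerZ horner_exp hornerXsubC subrr expn0 expr1 /= expr0 mulr1.
move=> i _; rewrite hornerZ horner_exp hornerXsubC subrr expr0n.
have : (1 < q ^ (bump 0 i))%N by rewrite -[1%N](expn0 q) ltn_exp2l.
by case: (q ^ _)%N => [|[|n]] //= _; rewrite mulr0.
Qed.

Lemma chk_x (F : finFieldType) q t (q0 : (0 < q)%N) (e z x : F) (xe : x != e) :
  (chk q t e z).[x] = trace_FB q t (z * (x - e)) / (x - e).
Proof.
have xe0 : x - e != 0 by rewrite subr_eq0.
rewrite /chk /trace_FB horner_sum mulr_suml; apply: eq_bigr => j _.
rewrite hornerZ horner_exp hornerXsubC exprMn -mulrA; congr (_ * _).
apply: (mulIf xe0); rewrite divfK // -exprSr prednK //.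
by rewrite expn_gt0 q0.
Qed.

Lemma key (F : finFieldType) q t (Hq : [pchar F].-nat q) (q1 : (1 < q)%N)
  (Ht : (1 <= t)%N) (HF : #|F| = (q ^ t)%N) (Hn : ((#|F|)%:R : F) = 0)
  (e u v : F) (h : {poly F}) (eu : e != u) (ev : e != v) (uv : u != v)
  (Hh : (size h <= #|F| - #|F| %/ q)%N)
  (Hx : forall x, x != e -> x != u -> x != v -> trace_FB q t (h.[x] / (x - e)) = 0) :
  h.[e] = trace_FB q t (h.[u] / (u - e)) * (e - u)
        + trace_FB q t (h.[v] / (v - e)) * (e - v).
Proof.
have q0 : (0 < q)%N by apply: ltnW.
have term : forall z x, x != e -> trace_FB q t (h.[x] * (chk q t e z).[x])
   = trace_FB q t (z * (x - e)) * trace_FB q t (h.[x] / (x - e)).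
  move=> z x xe; rewrite chk_x // [h.[x] * _]mulrCA (TrZ t _ (Tr_base Hq q0 Ht HF (z * (x - e)))).
  done.
apply/eqP; rewrite -subr_eq0; apply/eqP; apply: (Tr_nondeg q1 Ht HF) => z.
have Hs : (size (h * chk q t e z)%R <= #|F|.-1)%N.
  apply: leq_trans (size_polyMleq _ _) _.
  have := chk_size t q0 e z; move: Hh.
  case: t Ht HF {Hx term} => // t _ HF; rewrite HF expnS mulKn //= => Hh Hc.
  have : (q ^ t <= q * q ^ t)%N by rewrite leq_pmull.
  lia.
have S := psumP Hn Hs.
have S' : \sum_(x : F) trace_FB q t (h.[x] * (chk q t e z).[x]) = 0.
  rewrite -Tr_sum //; under eq_bigr do rewrite -hornerM.
  by rewrite S Tr0.
have ue : u != e by rewrite eq_sym.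
have ve : v != e by rewrite eq_sym.
have vu : v != u by rewrite eq_sym.
rewrite (bigD1 e) //= (bigD1 u) //= (bigD1 v) /= ?vu ?ve // in S'.
rewrite big1 ?addr0 in S'; last first.
  move=> x /andP[/andP[xe xu] xv].
  by rewrite term // Hx // mulr0.
rewrite chk_e // !term 1?eq_sym // in S'.
set cu := trace_FB q t (h.[u] / (u - e)) in S' *.
set cv := trace_FB q t (h.[v] / (v - e)) in S' *.
have -> : z * (h.[e] - (cu * (e - u) + cv * (e - v)))
   = z * h.[e] + (cu * (z * (u - e)) + cv * (z * (v - e))) by ring.
rewrite !TrD // !(TrZ t _ (Tr_base Hq q0 Ht HF _)).
by rewrite -[RHS]S' mulrC -/cu -/cv [cu * _]mulrC [cv * _]mulrC.
Qed.

Lemma cyc0 (F : fieldType) (x y z a b c : F) : a * b * c = 0 ->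
  x = y * a -> y = z * b -> z = x * c -> [/\ x = 0, y = 0 & z = 0].
Proof.
move=> H Hx Hy Hz.
have x0 : x = 0.
  have E : x = x * (a * b * c) by rewrite {1}Hx Hy Hz; ring.
  by rewrite E H mulr0.
have z0 : z = 0 by rewrite Hz x0 mul0r.
by split => //; rewrite Hy z0 mul0r.
Qed.

Lemma rel (F : finFieldType) q t (Hq : [pchar F].-nat q) (q0 : (0 < q)%N)
  (Ht : (1 <= t)%N) (HF : #|F| = (q ^ t)%N) (Ht0 : (t%:R : F) = 0)
  (a b w : F) (cba cbw hb : F) (ba : b != a)
  (Ha : cba ^+ q = cba) (Hw : cbw ^+ q = cbw) :
  hb = cba * (b - a) + cbw * (b - w) ->
  trace_FB q t (hb / (b - a)) = cbw * trace_FB q t ((b - w) / (b - a)).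
Proof.
move=> ->.
have ba0 : b - a != 0 by rewrite subr_eq0.
have -> : (cba * (b - a) + cbw * (b - w)) / (b - a) = cba * 1 + cbw * ((b - w) / (b - a)).
  by field.
by rewrite TrD // (TrZ t _ Ha) (TrZ t _ Hw) Tr1 Ht0 mulr0 add0r.
Qed.

Lemma sig_anti (F : finFieldType) q t (Hq : [pchar F].-nat q) (q0 : (0 < q)%N)
  (Ht0 : (t%:R : F) = 0) (i j k : F) (ij : i != j) :
  trace_FB q t ((j - k) / (j - i)) = - trace_FB q t ((i - k) / (i - j)).
Proof.
apply/eqP; rewrite -addr_eq0 -TrD //.
have ij0 : i - j != 0 by rewrite subr_eq0.
have ji0 : j - i != 0 by rewrite subr_eq0 eq_sym.
have -> : (j - k) / (j - i) + (i - k) / (i - j) = 1.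
  by field; rewrite ij0 ji0.
by apply/eqP; rewrite Tr1 Ht0.
Qed.

Lemma neg3 (F : fieldType) (a b c : F) : a * b * c = 0 -> - c * - b * - a = 0.
Proof. move=> H; have -> : - c * - b * - a = - (a * b * c) by ring. by rewrite H oppr0. Qed.

Lemma kernel (F : finFieldType) q t (Hq : [pchar F].-nat q) (q1 : (1 < q)%N)
  (Ht : (1 <= t)%N) (HF : #|F| = (q ^ t)%N) (Hn : ((#|F|)%:R : F) = 0)
  (Ht0 : (t%:R : F) = 0)
  (e1 e2 e3 : F) (d12 : e1 != e2) (d13 : e1 != e3) (d23 : e2 != e3)
  (h : {poly F}) (Hh : (size h <= #|F| - #|F| %/ q)%N)
  (Hx : forall x, x != e1 -> x != e2 -> x != e3 ->
     [/\ trace_FB q t (h.[x] / (x - e1)) = 0, trace_FB q t (h.[x] / (x - e2)) = 0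
       & trace_FB q t (h.[x] / (x - e3)) = 0])
  (HK : trace_FB q t ((e2 - e1) / (e2 - e3)) = 0 \/
        trace_FB q t ((e3 - e2) / (e3 - e1)) = 0 \/
        trace_FB q t ((e1 - e3) / (e1 - e2)) = 0) :
  [/\ h.[e1] = 0, h.[e2] = 0 & h.[e3] = 0].
Proof.
have q0 : (0 < q)%N by apply: ltnW.
have d21 : e2 != e1 by rewrite eq_sym.
have d31 : e3 != e1 by rewrite eq_sym.
have d32 : e3 != e2 by rewrite eq_sym.
pose c a b := trace_FB q t (h.[b] / (b - a)).
have cb : forall a b, c a b ^+ q = c a b by move=> a b; apply: Tr_base.
have K1 : h.[e1] = c e1 e2 * (e1 - e2) + c e1 e3 * (e1 - e3).
  apply: (key Hq q1 Ht HF Hn d12 d13 d23 Hh) => x x1 x2 x3.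
  by case: (Hx x x1 x2 x3).
have K2 : h.[e2] = c e2 e1 * (e2 - e1) + c e2 e3 * (e2 - e3).
  apply: (key Hq q1 Ht HF Hn d21 d23 d13 Hh) => x x2 x1 x3.
  by case: (Hx x x1 x2 x3).
have K3 : h.[e3] = c e3 e1 * (e3 - e1) + c e3 e2 * (e3 - e2).
  apply: (key Hq q1 Ht HF Hn d31 d32 d12 Hh) => x x3 x1 x2.
  by case: (Hx x x1 x2 x3).
have R12 := rel Hq q0 Ht HF Ht0 d21 (cb _ _) (cb _ _) K2.
have R13 := rel Hq q0 Ht HF Ht0 d31 (cb _ _) (cb _ _) K3.
have R21 := rel Hq q0 Ht HF Ht0 d12 (cb _ _) (cb _ _) K1.
have R23 := rel Hq q0 Ht HF Ht0 d32 (cb _ _) (cb _ _) (etrans K3 (addrC _ _)).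
have R31 := rel Hq q0 Ht HF Ht0 d13 (cb _ _) (cb _ _) (etrans K1 (addrC _ _)).
have R32 := rel Hq q0 Ht HF Ht0 d23 (cb _ _) (cb _ _) (etrans K2 (addrC _ _)).
rewrite -/(c e1 e2) in R12; rewrite -/(c e1 e3) in R13; rewrite -/(c e2 e1) in R21.
rewrite -/(c e2 e3) in R23; rewrite -/(c e3 e1) in R31; rewrite -/(c e3 e2) in R32.
have P2 : trace_FB q t ((e3 - e2) / (e3 - e1)) * trace_FB q t ((e2 - e1) / (e2 - e3))
          * trace_FB q t ((e1 - e3) / (e1 - e2)) = 0.
  by case: HK => [->|[->|->]]; rewrite ?mulr0 ?mul0r.
have [c13 c32 c21] := cyc0 P2 R13 R32 R21.
have P1 : trace_FB q t ((e2 - e3) / (e2 - e1)) * trace_FB q t ((e3 - e1) / (e3 - e2))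
          * trace_FB q t ((e1 - e2) / (e1 - e3)) = 0.
  rewrite (sig_anti Hq q0 Ht0 e3 d12) (sig_anti Hq q0 Ht0 e1 d23).
  rewrite (sig_anti Hq q0 Ht0 e2 d31).
  exact: neg3.
have [c12 c23 c31] := cyc0 P1 R12 R23 R31.
by split; [rewrite K1 | rewrite K2 | rewrite K3]; rewrite /c in c12 c13 c21 c23 c31 c32 *;
  rewrite ?c12 ?c13 ?c21 ?c23 ?c31 ?c32 !mul0r addr0.
Qed.

Theorem theorem4 (p m t : nat) (F : finFieldType)
  (Hp : prime p) (Hm : (1 <= m)%N) (Ht : (1 <= t)%N) (Hpt : (p %| t)%N)
  (HF : #|F| = (p ^ (m * t))%N)
  (as_ ab a' : F)
  (Hd1 : as_ != ab) (Hd2 : as_ != a') (Hd3 : ab != a')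
  (HK : trace_FB (p ^ m) t ((ab - as_) / (ab - a')) = 0 \/
        trace_FB (p ^ m) t ((a' - ab) / (a' - as_)) = 0 \/
        trace_FB (p ^ m) t ((as_ - a') / (as_ - ab)) = 0) :
  centralized_repair_scheme (p ^ m) (#|F| - #|F| %/ p ^ m) [set as_; ab; a'] 3.
Proof.
have Hpc : p \in [pchar F] := card_finPcharP HF Hp.
have Hq : [pchar F].-nat (p ^ m)%N.
  by rewrite pnatX (eq_pnat _ (pcharf_eq Hpc)) pnat_id.
have q1 : (1 < p ^ m)%N.
  by rewrite -[1%N](expn0 p) ltn_exp2l ?prime_gt1.
have q0 : (0 < p ^ m)%N by apply: ltnW.
have HFq : #|F| = ((p ^ m) ^ t)%N by rewrite HF expnM.
have Hn : ((#|F|)%:R : F) = 0.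
  apply/eqP; rewrite -(dvdn_pcharf Hpc) HF dvdn_exp //.
  by rewrite muln_gt0 Hm Ht.
have Ht0 : (t%:R : F) = 0 by apply/eqP; rewrite -(dvdn_pcharf Hpc).
set E := [set as_; ab; a'].
set k := (#|F| - #|F| %/ p ^ m)%N.
pose ej (j : 'I_3) := nth as_ [:: as_; ab; a'] j.
pose g (a : F) (j : 'I_3) (x : F) := trace_FB (p ^ m) t (x / (a - ej j)).
pose Pr (D : F -> 'I_3 -> F) (f0 : {poly F}) :=
  (size f0 <= k)%N /\ forall a j, a \notin E -> D a j = g a j f0.[a].
exists g, (fun D e => (epsilon (inhabits 0) (Pr D)).[e]); split.
  by move=> a j x; apply/eqP; apply: Tr_base.
move=> f Hf e He.
set D := fun a j => _.
have ex : exists f0, Pr D f0.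
  by exists f; split => // a j /negbTE aE; rewrite /D aE.
have [Hs0 Hd0] := epsilon_spec (inhabits 0) (Pr D) ex.
set f0 := epsilon _ _ in Hs0 Hd0 *.
pose h := f - f0.
have Hh : (size h <= k)%N.
  apply: leq_trans (size_polyD _ _) _; rewrite size_polyN geq_max Hf Hs0.
  by [].
have HxE : forall x, x != as_ -> x != ab -> x != a' -> x \notin E.
  by move=> x x1 x2 x3; rewrite !inE (negbTE x1) (negbTE x2) (negbTE x3).
have Hx : forall x, x != as_ -> x != ab -> x != a' -> forall j : 'I_3,
    trace_FB (p ^ m) t (h.[x] / (x - ej j)) = 0.
  move=> x x1 x2 x3 j; have xE := HxE x x1 x2 x3.
  have := Hd0 x j xE; rewrite /D (negbTE xE) => Hj.
  rewrite /h hornerD hornerN mulrBl TrD // TrN //.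
  by rewrite -/(g x j f.[x]) -/(g x j f0.[x]) Hj subrr.
have [h1 h2 h3] := kernel Hq q1 Ht HFq Hn Ht0 Hd1 Hd2 Hd3 Hh
  (fun x x1 x2 x3 => And3 (Hx x x1 x2 x3 0) (Hx x x1 x2 x3 1) (Hx x x1 x2 x3 2)) HK.
have Hz : forall y, h.[y] = 0 -> f0.[y] = f.[y].
  by move=> y /eqP; rewrite /h hornerD hornerN subr_eq0 => /eqP ->.
by move: He; rewrite !inE => /orP[/orP[]|] /eqP ->; apply: Hz.
Qed.
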